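(* If $(T_1,T_2,c)\in\mathcal A_2^{\rm sp}$, then $T_1$ is not weakly embeddable in $T_2$; that is, there is no map $f:T_1\to T_2$ such that $x<_{T_1}y$ implies $f(x)<_{T_2}f(y)$.
   Context: For an ordinal $\gamma<\omega_1$, ${\rm ht}(\gamma)$ denotes the unique $\alpha$ with $\gamma\in[\omega\alpha,\omega\alpha+\omega)$. $\mathcal A$ denotes the set of all trees $T$ whose underlying set is $\{\langle\rangle\}\cup X$ for some $X\subseteq\omega_1$, where $\langle\rangle$ is the root (below every other element; considered to be of level $-1$), such that $T$ has height $\omega_1$, has no uncountable branch, is normal (two distinct elements of the same limit level have different sets of predecessors), and for every $\alpha<\omega_1$ the $\alpha$-th level ${\rm lev}_\alpha(T)$ is a subset of $[\omega\alpha,\omega\alpha+\omega)$ (so the tree height of $\gamma\ne\langle\rangle$ equals ${\rm ht}(\gamma)$). For $x,y\in T$, $x\cap_T y$ denotes the $<_T$-greatest element below or equal to both (the meet); $x\perp_T y$ means $x,y$ are $<_T$-incomparable. For $T_1,T_2\in\mathcal A$ and a pair $(x,y)\in{\rm lev}_\alpha(T_1)\times{\rm lev}_\alpha(T_2)$, $\alpha(x,y)$ denotes this $\alpha$. $\mathcal A_2^{\rm sp}$ is the set of all triples $(T_1,T_2,c)$ with $T_1,T_2\in\mathcal A$ and $c$ a function from $\bigcup_{\delta<\omega_1\text{ limit}}{\rm lev}_\delta(T_1)\times{\rm lev}_\delta(T_2)$ to $\omega$ such that whenever $c(x_1,y_1)=c(x_2,y_2)$ and $(x_1,y_1)\neq(x_2,y_2)$,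 then $\alpha(x_1,y_1)\ne\alpha(x_2,y_2)$, $x_1\perp_{T_1}x_2$, $y_1\perp_{T_2}y_2$, and ${\rm ht}(x_1\cap_{T_1}x_2)>{\rm ht}(y_1\cap_{T_2}y_2)$. *)

(* Defs.v *)
From Stdlib Require Import Classical.

(* ---------- A model of omega_1 ----------
   O with strict order ltO is (isomorphic to) omega_1 iff ltO is a strict
   well-order, O is uncountable, and every proper initial segment is countable. *)
Definition countable_type (X : Type) : Prop :=
  exists f : X -> nat, forall a b, f a = f b -> a = b.

Definition is_omega1 {O : Type} (ltO : O -> O -> Prop) : Prop :=
  (forall a, ~ ltO a a) /\
  (forall a b c, ltO a b -> ltO b c -> ltO a c) /\
  (forall a b, ltO a b \/ a = b \/ ltO b a) /\
  well_founded ltO /\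
  ~ countable_type O /\
  (forall a, countable_type {b : O | ltO b a}).

Definition is_limit {O : Type} (ltO : O -> O -> Prop) (d : O) : Prop :=
  (exists b, ltO b d) /\ (forall b, ltO b d -> exists g, ltO b g /\ ltO g d).

(* ---------- Nodes ----------
   The countable ordinal omega*alpha + n is encoded as the pair (alpha, n);
   None is the root <>.  So ht (Some (alpha, n)) = alpha. *)
Definition node (O : Type) : Type := option (O * nat).

Definition leT {N : Type} (lt : N -> N -> Prop) (x y : N) : Prop := lt x y \/ x = y.

Definition is_tree_order {N : Type} (mem : N -> Prop) (lt : N -> N -> Prop) : Prop :=
  (forall x y, lt x y -> mem x /\ mem y) /\
  (forall x, ~ lt x x) /\
  (forall x y z, lt x y -> lt y z -> lt x z) /\
  (forall x y z, lt x z -> lt y z -> lt x y \/ x = y \/ lt y x) /\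
  well_founded lt.

Definition level_is {O : Type} (ltO : O -> O -> Prop) (lt : node O -> node O -> Prop)
  (x : node O) (a : O) : Prop :=
  exists f : {y : node O | lt y x /\ y <> None} -> {b : O | ltO b a},
    (forall u, exists v, f v = u) /\
    (forall v w, lt (proj1_sig v) (proj1_sig w) <-> ltO (proj1_sig (f v)) (proj1_sig (f w))).

Definition is_branch {N : Type} (mem : N -> Prop) (lt : N -> N -> Prop) (B : N -> Prop) : Prop :=
  (forall x, B x -> mem x) /\
  (forall x y, B x -> B y -> lt x y \/ x = y \/ lt y x) /\
  (forall z, mem z -> (forall x, B x -> lt x z \/ x = z \/ lt z x) -> B z).

Definition in_A {O : Type} (ltO : O -> O -> Prop)
  (mem : node O -> Prop) (lt : node O -> node O -> Prop) : Prop :=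
  mem None /\
  is_tree_order mem lt /\
  (forall x, mem x -> x <> None -> lt None x) /\
  (* lev_alpha(T) is a subset of [omega alpha, omega alpha + omega) *)
  (forall a n, mem (Some (a, n)) -> level_is ltO lt (Some (a, n)) a) /\
  (* height omega_1: every level is nonempty *)
  (forall a, exists n, mem (Some (a, n))) /\
  (forall B, is_branch mem lt B -> countable_type {x : node O | B x}) /\
  (forall d n m, is_limit ltO d -> mem (Some (d, n)) -> mem (Some (d, m)) -> n <> m ->
     ~ (forall z, lt z (Some (d, n)) <-> lt z (Some (d, m)))).

Definition perp {N : Type} (lt : N -> N -> Prop) (x y : N) : Prop :=
  x <> y /\ ~ lt x y /\ ~ lt y x.

Definition is_meet {N : Type} (lt : N -> N -> Prop) (x y m : N) : Prop :=
  leT lt m x /\ leT lt m y /\ (forall z, leT lt z x -> leT lt z y -> leT lt z m).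

(* ht comparison on nodes, the root having height -1 *)
Definition hgt_lt {O : Type} (ltO : O -> O -> Prop) (a b : node O) : Prop :=
  match a, b with
  | _, None => False
  | None, Some _ => True
  | Some (al, _), Some (be, _) => ltO al be
  end.

(* membership in \mathcal A_2^{sp}; c is only constrained on pairs at a common limit level *)
Definition in_A2sp {O : Type} (ltO : O -> O -> Prop)
  (mem1 : node O -> Prop) (lt1 : node O -> node O -> Prop)
  (mem2 : node O -> Prop) (lt2 : node O -> node O -> Prop)
  (c : O * nat -> O * nat -> nat) : Prop :=
  in_A ltO mem1 lt1 /\ in_A ltO mem2 lt2 /\
  (forall d1 n1 m1 d2 n2 m2,
     is_limit ltO d1 -> is_limit ltO d2 ->
     mem1 (Some (d1, n1)) -> mem2 (Some (d1, m1)) ->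
     mem1 (Some (d2, n2)) -> mem2 (Some (d2, m2)) ->
     c (d1, n1) (d1, m1) = c (d2, n2) (d2, m2) ->
     ((d1, n1), (d1, m1)) <> ((d2, n2), (d2, m2)) ->
     d1 <> d2 /\
     perp lt1 (Some (d1, n1)) (Some (d2, n2)) /\
     perp lt2 (Some (d1, m1)) (Some (d2, m2)) /\
     exists mx my, is_meet lt1 (Some (d1, n1)) (Some (d2, n2)) mx /\
                   is_meet lt2 (Some (d1, m1)) (Some (d2, m2)) my /\
                   hgt_lt ltO my mx).

(* Main.v *)
Require Import Defs.
From Stdlib Require Import Classical ClassicalEpsilon Cantor.

Lemma my_choice {A B : Type} (R : A -> B -> Prop) :
  (forall a, exists b, R a b) -> exists g, forall a, R a (g a).
Proof.
  intros H. exists (fun a => proj1_sig (constructive_indefinite_description _ (H a))).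
  intro a. exact (proj2_sig (constructive_indefinite_description _ (H a))).
Qed.

Lemma key {O : Type} {ltO : O -> O -> Prop} (HO : is_omega1 ltO) (A : Type) (g1 g2 : A -> O) (al be : O) :
  (forall b, ltO b al -> exists u, g1 u = b) ->
  (forall u v, ltO (g1 u) (g1 v) -> ltO (g2 u) (g2 v)) ->
  (forall u, ltO (g2 u) be) -> ~ ltO be al.
Proof.
  intros Hs Hm Hb Hba.
  destruct HO as (Hirr & Htr & Htri & Hwf & _ & _).
  assert (C: forall b u, g1 u = b -> ~ ltO (g2 u) b).
  { intro b; induction (Hwf b) as [b _ IH]; intros u Hu Hlt.
    destruct (Hs (g2 u) (Htr _ _ _ (Hb u) Hba)) as [v Hv].
    apply (IH (g2 u) Hlt v Hv). apply Hm. rewrite Hv, Hu. exact Hlt. }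
  destruct (Hs be Hba) as [u Hu]. exact (C be u Hu (Hb u)).
Qed.

Lemma nobelow {O : Type} {ltO : O -> O -> Prop} {mem lt} (HA : in_A ltO mem lt) z : ~ lt z None.
Proof.
  destruct HA as (H0 & (Hm & Hirr & Htr & _ & _) & Hroot & _).
  intro H. destruct (Hm _ _ H) as [Hz _].
  destruct z as [z|].
  - apply (Hirr None). apply (Htr _ _ _ (Hroot _ Hz ltac:(discriminate)) H).
  - exact (Hirr None H).
Qed.

Lemma HT0 {O : Type} {ltO : O -> O -> Prop} (HO : is_omega1 ltO) {mem lt} (HA : in_A ltO mem lt)
  (w : node O) (be : O)
  (Lw : {y | lt y w /\ y <> None} -> {b | ltO b be})
  (HLw : forall v v', lt (proj1_sig v) (proj1_sig v') <-> ltO (proj1_sig (Lw v)) (proj1_sig (Lw v')))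
  z g n (p : lt z w /\ z <> None) : z = Some (g, n) -> ~ ltO (proj1_sig (Lw (exist _ z p))) g.
Proof.
  intros Hz.
  destruct HA as (H0 & (Hm & Hirr & Htr & _ & _) & Hroot & Hlev & _).
  assert (Hmz : mem z) by exact (proj1 (Hm _ _ (proj1 p))).
  subst z. destruct (Hlev g n Hmz) as [Lz [Hsz HLz]].
  assert (pf : forall u : {y | lt y (Some (g,n)) /\ y <> None},
     lt (proj1_sig u) w /\ proj1_sig u <> None).
  { intro u. exact (conj (Htr _ _ _ (proj1 (proj2_sig u)) (proj1 p)) (proj2 (proj2_sig u))). }
  apply (key HO _ (fun u => proj1_sig (Lz u)) (fun u => proj1_sig (Lw (exist _ (proj1_sig u) (pf u))))).
  - intros b Hb. destruct (Hsz (exist _ b Hb)) as [v Hv]. exists v. rewrite Hv. reflexivity.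
  - intros u v Huv. apply HLw. simpl. apply HLz. exact Huv.
  - intros u. apply HLw. simpl. exact (proj1 (proj2_sig u)).
Qed.

Lemma HT {O : Type} {ltO : O -> O -> Prop} (HO : is_omega1 ltO) {mem lt} (HA : in_A ltO mem lt)
  z w g n be k : lt z w -> z = Some (g, n) -> w = Some (be, k) -> ltO g be.
Proof.
  intros Hzw Hz Hw.
  pose proof HA as (H0 & (Hm & Hirr & Htr & _ & _) & Hroot & Hlev & _).
  pose proof HO as (Oirr & Otr & Otri & _).
  assert (Hmw : mem w) by exact (proj2 (Hm _ _ Hzw)).
  subst w. destruct (Hlev be k Hmw) as [Lw [Hsw HLw]].
  assert (p : lt z (Some (be,k)) /\ z <> None) by (split; [exact Hzw| subst z; discriminate]).
  pose proof (HT0 HO HA _ be Lw HLw z g n p Hz) as Hn.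
  pose proof (proj2_sig (Lw (exist _ z p))) as Hd.
  destruct (Otri g (proj1_sig (Lw (exist _ z p)))) as [H|[H|H]].
  - exact (Otr _ _ _ H Hd).
  - rewrite H; exact Hd.
  - contradiction.
Qed.

Lemma EXIST {O : Type} {ltO : O -> O -> Prop} (HO : is_omega1 ltO) {mem lt} (HA : in_A ltO mem lt)
  be k d : mem (Some (be, k)) -> ltO d be -> exists m, lt (Some (d, m)) (Some (be, k)).
Proof.
  intros Hmw Hdb.
  pose proof HA as (H0 & (Hm & Hirr & Htr & _ & _) & Hroot & Hlev & _).
  pose proof HO as (Oirr & Otr & Otri & Hwf & _).
  destruct (Hlev be k Hmw) as [Lw [Hs HLw]].
  set (w := Some (be, k)) in *.
  assert (C: forall x v, proj1_sig (Lw v) = x -> forall g m, proj1_sig v = Some (g, m) -> ~ ltO g x).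
  { intro x; induction (Hwf x) as [x _ IH]; intros v Hv g m Hvg Hgx.
    assert (Hgb: ltO g be).
    { apply (Otr _ x); [exact Hgx| rewrite <- Hv; exact (proj2_sig (Lw v))]. }
    destruct (Hs (exist _ g Hgb)) as [v' Hv'].
    pose proof (proj2 (proj2_sig v')) as Hn'.
    destruct (proj1_sig v') as [[g' m']|] eqn:E; [|congruence].
    assert (Hlt : lt (proj1_sig v') (proj1_sig v)).
    { apply HLw. rewrite Hv', Hv. exact Hgx. }
    rewrite E, Hvg in Hlt.
    pose proof (HT HO HA _ _ g' m' g m Hlt eq_refl eq_refl) as Hg'g.
    exact (IH g Hgx v' (f_equal (@proj1_sig _ _) Hv') g' m' E Hg'g). }
  assert (LWeq : forall v g m, proj1_sig v = Some (g, m) -> proj1_sig (Lw v) = g).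
  { intros [z p] g m Hv. simpl in Hv.
    destruct (Otri (proj1_sig (Lw (exist _ z p))) g) as [H|[H|H]]; auto.
    - exfalso. exact (HT0 HO HA w be Lw HLw z g m p Hv H).
    - exfalso. exact (C _ (exist _ z p) eq_refl g m Hv H). }
  destruct (Hs (exist _ d Hdb)) as [v Hv].
  pose proof (proj2 (proj2_sig v)) as Hn. pose proof (proj1 (proj2_sig v)) as Hy.
  pose proof (LWeq v) as Hg.
  destruct (proj1_sig v) as [[g m]|] eqn:E; [|congruence].
  specialize (Hg g m E). rewrite Hv in Hg. simpl in Hg. subst g.
  exists m. exact Hy.
Qed.

Lemma fnone {O : Type} {ltO : O -> O -> Prop} {mem1 lt1 mem2 lt2}
  (HA1 : in_A ltO mem1 lt1) (HA2 : in_A ltO mem2 lt2) (f : node O -> node O)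
  (Hfl : forall x y, lt1 x y -> lt2 (f x) (f y)) x :
  mem1 x -> x <> None -> f x <> None.
Proof.
  intros Hx Hn E.
  pose proof HA1 as (_ & _ & Hroot & _).
  pose proof (Hfl _ _ (Hroot x Hx Hn)) as H. rewrite E in H.
  exact (nobelow HA2 _ H).
Qed.

Lemma HF {O : Type} {ltO : O -> O -> Prop} (HO : is_omega1 ltO) {mem1 lt1 mem2 lt2}
  (HA1 : in_A ltO mem1 lt1) (HA2 : in_A ltO mem2 lt2) (f : node O -> node O)
  (Hfm : forall x, mem1 x -> mem2 (f x))
  (Hfl : forall x y, lt1 x y -> lt2 (f x) (f y)) al n be k :
  mem1 (Some (al, n)) -> f (Some (al, n)) = Some (be, k) -> ~ ltO be al.
Proof.
  intros Hx Hf.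
  pose proof HA1 as (_ & (Hm1 & _) & _ & Hlev1 & _).
  pose proof HA2 as (_ & _ & _ & Hlev2 & _).
  destruct (Hlev1 al n Hx) as [L1 [Hs1 HL1]].
  assert (Hmf : mem2 (Some (be, k))) by (rewrite <- Hf; apply Hfm; exact Hx).
  destruct (Hlev2 be k Hmf) as [L2 [Hs2 HL2]].
  assert (pf : forall u : {y | lt1 y (Some (al, n)) /\ y <> None},
     lt2 (f (proj1_sig u)) (Some (be, k)) /\ f (proj1_sig u) <> None).
  { intro u. split.
    - rewrite <- Hf. apply Hfl. exact (proj1 (proj2_sig u)).
    - apply (fnone HA1 HA2 f Hfl).
      + exact (proj1 (Hm1 _ _ (proj1 (proj2_sig u)))).
      + exact (proj2 (proj2_sig u)). }
  apply (key HO _ (fun u => proj1_sig (L1 u)) (fun u => proj1_sig (L2 (exist _ (f (proj1_sig u)) (pf u))))).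
  - intros b Hb. destruct (Hs1 (exist _ b Hb)) as [v Hv]. exists v. rewrite Hv. reflexivity.
  - intros u v Huv. apply HL2. simpl. apply Hfl. apply HL1. exact Huv.
  - intros u. exact (proj2_sig (L2 _)).
Qed.

Lemma cov_below {O : Type} {ltO : O -> O -> Prop} (HO : is_omega1 ltO) a :
  exists e : nat -> O, forall b, ltO b a -> exists k, e k = b.
Proof.
  destruct HO as (_&_&_&_&_&Hc). destruct (Hc a) as [g Hg].
  exists (fun k => match excluded_middle_informative (exists u, g u = k) with
     | left H => proj1_sig (proj1_sig (constructive_indefinite_description _ H))
     | right _ => a end).
  intros b Hb. exists (g (exist _ b Hb)). cbv beta.
  destruct (excluded_middle_informative _) as [H|H].
  - destruct (constructive_indefinite_description _ H) as [u Hu]. simpl. rewrite (Hg _ _ Hu). reflexivity.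
  - exfalso; apply H; eauto.
Qed.

Lemma bound_seq {O : Type} {ltO : O -> O -> Prop} (HO : is_omega1 ltO) (e : nat -> O) :
  exists a, forall k, ltO (e k) a.
Proof.
  apply NNPP; intro Hn.
  pose proof HO as (Oirr & Otr & Otri & Owf & Onc & Ocb).
  assert (Hub : forall a, exists k, ~ ltO (e k) a).
  { intro a. apply NNPP; intro H. apply Hn. exists a. intro k. apply NNPP. intro H'. apply H. exists k. exact H'. }
  assert (Hcov : forall s, {c : nat -> O | forall b, ltO b s -> exists j, c j = b}).
  { intro s. apply constructive_indefinite_description. exact (cov_below HO s). }
  set (E := fun n => let (i, j) := Cantor.of_nat n in
              match j with 0 => e i | S j' => proj1_sig (Hcov (e i)) j' end).
  assert (Hsurj : forall b, exists n, E n = b).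
  { intro b. destruct (Hub b) as [k Hk]. destruct (Otri b (e k)) as [H|[H|H]].
    - destruct (proj2_sig (Hcov (e k)) b H) as [j Hj]. exists (Cantor.to_nat (k, S j)).
      unfold E. cbv beta. rewrite Cantor.cancel_of_to. exact Hj.
    - exists (Cantor.to_nat (k, 0)). unfold E. cbv beta. rewrite Cantor.cancel_of_to. symmetry; exact H.
    - contradiction. }
  apply Onc. exists (fun b => proj1_sig (constructive_indefinite_description _ (Hsurj b))).
  intros a b H.
  destruct (constructive_indefinite_description _ (Hsurj a)) as [na Ha].
  destruct (constructive_indefinite_description _ (Hsurj b)) as [nb Hb]. simpl in H.
  rewrite <- Ha, <- Hb, H. reflexivity.
Qed.

Lemma minimal {O : Type} {ltO : O -> O -> Prop} (HO : is_omega1 ltO) (P : O -> Prop) :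
  (exists a, P a) -> exists a, P a /\ forall b, ltO b a -> ~ P b.
Proof.
  intros [a Ha]. apply NNPP; intro Hn.
  destruct HO as (_&_&_&Owf&_).
  assert (forall x, ~ P x).
  { intro x; induction (Owf x) as [x _ IH]. intro Hx. apply Hn. exists x. split; auto. }
  eauto.
Qed.

Lemma stepF {O : Type} {ltO : O -> O -> Prop} (HO : is_omega1 ltO) (f : node O -> node O) a :
  exists a', ltO a a' /\ forall g n b k, (ltO g a \/ g = a) -> f (Some (g,n)) = Some (b,k) -> ltO b a'.
Proof.
  destruct (cov_below HO a) as [ca Hca].
  set (ht' := fun x : node O => match x with Some (b,_) => b | None => a end).
  set (s := fun m => let (i,j) := Cantor.of_nat m in
             match i with 0 => a | 1 => ht' (f (Some (a,j))) | S (S i') => ht' (f (Some (ca i', j))) end).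
  destruct (bound_seq HO s) as [a' Ha'].
  exists a'. split.
  - specialize (Ha' (Cantor.to_nat (0,0))). unfold s in Ha'; cbv beta in Ha'; rewrite Cantor.cancel_of_to in Ha'. exact Ha'.
  - intros g n b k Hg Hf. destruct Hg as [Hg|Hg].
    + destruct (Hca g Hg) as [i Hi]. specialize (Ha' (Cantor.to_nat (S (S i), n))).
      unfold s in Ha'; cbv beta in Ha'; rewrite Cantor.cancel_of_to in Ha'.
      change (ltO (ht' (f (Some (ca i, n)))) a') in Ha'. rewrite Hi, Hf in Ha'. exact Ha'.
    + subst g. specialize (Ha' (Cantor.to_nat (1, n))).
      unfold s in Ha'; cbv beta in Ha'; rewrite Cantor.cancel_of_to in Ha'.
      change (ltO (ht' (f (Some (a, n)))) a') in Ha'. rewrite Hf in Ha'. exact Ha'.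
Qed.

Lemma unbounded {O : Type} {ltO : O -> O -> Prop} (HO : is_omega1 ltO) (f : node O -> node O) a0 :
  exists d, ltO a0 d /\ (is_limit ltO d /\
    (forall g n b k, ltO g d -> f (Some (g,n)) = Some (b,k) -> ltO b d)).
Proof.
  pose proof HO as (Oirr & Otr & Otri & _).
  assert (HF: forall a, {a' | ltO a a' /\ forall g n b k, (ltO g a \/ g = a) -> f (Some (g,n)) = Some (b,k) -> ltO b a'}).
  { intro a. apply constructive_indefinite_description. apply stepF; auto. }
  set (sq := fix sq (k:nat) : O := match k with 0 => a0 | S k' => proj1_sig (HF (sq k')) end).
  assert (Hsq : forall k, ltO (sq k) (sq (S k))) by (intro k; exact (proj1 (proj2_sig (HF (sq k))))).
  assert (Hcl : forall k g n b kk, (ltO g (sq k) \/ g = sq k) -> f (Some (g,n)) = Some (b,kk) -> ltO b (sq (S k)))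
    by (intro k; exact (proj2 (proj2_sig (HF (sq k))))).
  destruct (bound_seq HO sq) as [ub Hub].
  destruct (minimal HO (fun d => forall k, ltO (sq k) d) (ex_intro _ ub Hub)) as [d [Hd Hmin]].
  assert (Hbelow : forall b, ltO b d -> exists k, ltO b (sq k) \/ b = sq k).
  { intros b Hb. apply NNPP; intro H. apply (Hmin b Hb). intro k.
    destruct (Otri (sq k) b) as [h|[h|h]]; auto; exfalso; apply H; exists k; auto. }
  exists d. split; [exact (Hd 0)|]. split.
  - split; [exists a0; exact (Hd 0)|]. intros b Hb. destruct (Hbelow b Hb) as [k [h|h]].
    + exists (sq (S k)). split; [exact (Otr _ _ _ h (Hsq k)) | apply Hd].
    + exists (sq (S k)). subst. split; [apply Hsq|apply Hd].
  - intros g n b kk Hg Hf. destruct (Hbelow g Hg) as [k h].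
    apply (Otr _ (sq (S k))); [exact (Hcl k g n b kk h Hf)| apply Hd].
Qed.

Theorem claim3p4 (O : Type) (ltO : O -> O -> Prop) (HO : is_omega1 ltO)
  (mem1 : node O -> Prop) (lt1 : node O -> node O -> Prop)
  (mem2 : node O -> Prop) (lt2 : node O -> node O -> Prop)
  (c : O * nat -> O * nat -> nat)
  (Hsp : in_A2sp ltO mem1 lt1 mem2 lt2 c) :
  ~ exists f : node O -> node O,
      (forall x, mem1 x -> mem2 (f x)) /\
      (forall x y, lt1 x y -> lt2 (f x) (f y)).
Proof.
  intros [f [Hfm Hfl]].
  destruct Hsp as (HA1 & HA2 & Hc).
  pose proof HO as (Oirr & Otr & Otri & Owf & Onc & Ocb).
  pose proof HA1 as (_ & (Tm1 & Tirr1 & Ttr1 & Tcmp1 & _) & Troot1 & _ & Tne1 & _).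
  pose proof HA2 as (_ & (Tm2 & Tirr2 & Ttr2 & Tcmp2 & _) & Troot2 & _ & _).
  set (S := fun d => is_limit ltO d /\ forall g n b k, ltO g d -> f (Some (g,n)) = Some (b,k) -> ltO b d).
  assert (Hch : forall d, exists p : nat, S d -> exists n m, mem1 (Some (d,n)) /\ mem2 (Some (d,m)) /\
            leT lt2 (Some (d,m)) (f (Some (d,n))) /\ c (d,n) (d,m) = p).
  { intro d. destruct (classic (S d)) as [HS|HS]; [|exists 0; tauto].
    destruct (Tne1 d) as [n Hn].
    assert (Hfn : f (Some (d,n)) <> None) by (apply (fnone HA1 HA2 f Hfl); auto; discriminate).
    destruct (f (Some (d,n))) as [[be k]|] eqn:Ef; [|congruence].
    assert (Hmb : mem2 (Some (be,k))) by (rewrite <- Ef; apply Hfm; exact Hn).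
    pose proof (HF HO HA1 HA2 f Hfm Hfl d n be k Hn Ef) as Hnb.
    destruct (Otri d be) as [h|[h|h]].
    - destruct (EXIST HO HA2 be k d Hmb h) as [m Hm]. exists (c (d,n) (d,m)). intros _. exists n, m.
      split; [exact Hn|split; [exact (proj1 (Tm2 _ _ Hm))|split; [left; rewrite Ef; exact Hm|reflexivity]]].
    - subst be. exists (c (d,n) (d,k)). intros _. exists n, k.
      split; [exact Hn|split; [exact Hmb|split; [right; rewrite Ef; reflexivity|reflexivity]]].
    - contradiction. }
  destruct (my_choice _ Hch) as [col Hcol].
  assert (Hinh : exists o : O, True).
  { apply NNPP; intro H. apply Onc. exists (fun _ => 0). intros a. exfalso; apply H; exists a; trivial. }
  destruct Hinh as [o _].
  assert (Hpig : exists d1 d2, S d1 /\ S d2 /\ d1 <> d2 /\ col d1 = col d2).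
  { apply NNPP; intro Hn.
    assert (HE : forall k, exists d, (exists d', S d' /\ col d' = k) -> S d /\ col d = k).
    { intro k. destruct (classic (exists d', S d' /\ col d' = k)) as [[d' Hd']|H];
        [exists d'; auto| exists o; intro; contradiction]. }
    destruct (my_choice _ HE) as [E HEs].
    destruct (bound_seq HO E) as [a Ha].
    destruct (unbounded HO f a) as [d [Had HSd]].
    destruct (HEs (col d) (ex_intro _ d (conj HSd eq_refl))) as [HS' Hc'].
    destruct (classic (E (col d) = d)) as [Heq|Hne].
    - pose proof (Ha (col d)) as h. rewrite Heq in h. exact (Oirr d (Otr _ _ _ h Had)).
    - apply Hn. exists (E (col d)), d. auto. }
  destruct Hpig as (d1 & d2 & HS1 & HS2 & Hd12 & Hcc).
  destruct (Hcol d1 HS1) as (n1 & m1 & Hx1 & Hy1 & Hle1 & Hc1).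
  destruct (Hcol d2 HS2) as (n2 & m2 & Hx2 & Hy2 & Hle2 & Hc2).
  assert (Hceq : c (d1, n1) (d1, m1) = c (d2, n2) (d2, m2)) by congruence.
  assert (Hpne : ((d1, n1), (d1, m1)) <> ((d2, n2), (d2, m2))) by (intro E; apply Hd12; congruence).
  destruct (Hc d1 n1 m1 d2 n2 m2 (proj1 HS1) (proj1 HS2) Hx1 Hy1 Hx2 Hy2 Hceq Hpne)
    as (_ & Hperp & _ & mx & my & Hmx & Hmy & Hh).
  destruct mx as [[al q]|]; [|destruct my as [[? ?]|]; exact Hh].
  destruct Hperp as (Hp0 & Hp1 & Hp2).
  assert (Hlt1 : lt1 (Some (al,q)) (Some (d1,n1))).
  { destruct Hmx as [[h|h] [h2 _]]; [exact h|]. exfalso. rewrite h in h2.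
    destruct h2 as [h2|h2]; [exact (Hp1 h2)|exact (Hp0 h2)]. }
  assert (Hlt2 : lt1 (Some (al,q)) (Some (d2,n2))).
  { destruct Hmx as [h2 [[h|h] _]]; [exact h|]. exfalso. rewrite h in h2.
    destruct h2 as [h2|h2]; [exact (Hp2 h2)|exact (Hp0 (eq_sym h2))]. }
  assert (Hmm : mem1 (Some (al,q))) by exact (proj1 (Tm1 _ _ Hlt1)).
  assert (Hfn : f (Some (al,q)) <> None) by (apply (fnone HA1 HA2 f Hfl); auto; discriminate).
  destruct (f (Some (al,q))) as [[be kk]|] eqn:Ef; [|congruence].
  pose proof (HF HO HA1 HA2 f Hfm Hfl al q be kk Hmm Ef) as Hnb.
  assert (Hkey : forall d n m, S d -> leT lt2 (Some (d,m)) (f (Some (d,n))) ->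
            lt1 (Some (al,q)) (Some (d,n)) -> leT lt2 (Some (be,kk)) (Some (d,m))).
  { intros d n m HSd Hle Hl.
    pose proof (HT HO HA1 _ _ al q d n Hl eq_refl eq_refl) as Hald.
    pose proof (proj2 HSd al q be kk Hald Ef) as Hbd.
    assert (Hff : lt2 (Some (be,kk)) (f (Some (d,n)))) by (rewrite <- Ef; apply Hfl; exact Hl).
    destruct Hle as [h|h].
    - destruct (Tcmp2 _ _ _ Hff h) as [h'|[h'|h']].
      + left; exact h'.
      + injection h' as e1 e2. subst. exfalso; exact (Oirr _ Hbd).
      + exfalso. pose proof (HT HO HA2 _ _ d m be kk h' eq_refl eq_refl) as hh.
        exact (Oirr _ (Otr _ _ _ hh Hbd)).
    - left. rewrite h. exact Hff. }
  pose proof (proj2 (proj2 Hmy) _ (Hkey _ _ _ HS1 Hle1 Hlt1) (Hkey _ _ _ HS2 Hle2 Hlt2)) as Hfmy.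
  destruct my as [[mu r]|]; simpl in Hh.
  - destruct Hfmy as [h|h].
    + pose proof (HT HO HA2 _ _ be kk mu r h eq_refl eq_refl) as hh. exact (Hnb (Otr _ _ _ hh Hh)).
    + injection h as e1 e2. subst. exact (Hnb Hh).
  - destruct Hfmy as [h|h]; [exact (nobelow HA2 _ h)|discriminate].
Qed.
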